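(* Let $(V,E)$ be a task hypergraph, let $R \subseteq V$ be the set of its initial vertices, and let $W \subseteq V \setminus R$. Then the relation $\mathcal{R} \subseteq \mathrm{Dom}(R)\times\mathrm{Dom}(W)$ defined by $$\exists v_1 \in \mathrm{Dom}(t_1)\cdots\exists v_m\in\mathrm{Dom}(t_m),\; e_1(R_1,W_1)\wedge\cdots\wedge e_n(R_n,W_n),$$ where $\{v_1,\dots,v_m\} = V\setminus(R\cup W)$ with types $t_1,\dots,t_m$ and $\{e_1,\dots,e_n\}=E$ (each $e_k$ a task with read set $R_k$ and write set $W_k$), is total: for every $r\in\mathrm{Dom}(R)$ there exists $w\in\mathrm{Dom}(W)$ with $(r,w)\in\mathcal{R}$. In other words, every relation in $\mathrm{TG}(R,W)$ is total.
   Context: Variables are typed; each type $t$ has a domain $\mathrm{Dom}(t)$ (e.g. $\mathrm{Dom}(\mathtt{unit})=\{()\}$, $\mathrm{Dom}(\mathtt{bool})=\{\mathrm{true},\mathrm{false}\}$, $\mathrm{Dom}(\mathtt{int})=\mathbb{Z}$). For a finite set of variables $V$, $\mathrm{Dom}(V)=\prod_{v\in V}\mathrm{Dom}(t_v)$ if $V\neq\emptyset$ and $\{()\}$ if $V=\emptyset$. A task $e$ with read set $R$ and write set $W$ (finite, disjoint variable sets), written $e(R,W)$, is a relation $e\subseteq \mathrm{Dom}(R)\times\mathrm{Dom}(W)$ that is total: for all $r\in\mathrm{Dom}(R)$ there is $w\in\mathrm{Dom}(W)$ with $(r,w)\in e$. A directed hypergraph $(V,E)$ has hyperedges $e$ with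 a source vertex set $\mathrm{In}(e)$ and a target vertex set $\mathrm{Out}(e)$; a vertex $v$ is initial if $v\notin\mathrm{Out}(e)$ for all $e\in E$. A task hypergraph (TG) is a directed hypergraph whose vertices are variables and whose hyperedges are tasks, such that (i) it is acyclic, (ii) no vertex is isolated, (iii) each vertex is in $\mathrm{Out}(e)$ for at most one $e$, and (iv) for each task $e(R_e,W_e)\in E$, $\mathrm{In}(e)=R_e$ and $\mathrm{Out}(e)=W_e$. $\mathrm{TG}(R,W)$ denotes the set of all relations obtained from TGs as in the claim. *)

(* Defs.v *)
From mathcomp Require Import all_boot.
From Stdlib Require Import Relations.
Set Implicit Arguments. Unset Strict Implicit. Unset Printing Implicit Defensive.

(* Variables are the elements of a finite type V; variable v has
   domain D v (= Dom(t_v)). *)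

(* Dom(S) for a finite set S of variables: assignments of a value to each
   variable of S.  (For S = set0 this is the one-point type, as in the paper.) *)
Definition Dom (V : finType) (D : V -> Type) (S : {set V}) : Type :=
  forall x : {v : V | v \in S}, D (sval x).

Definition restr (V : finType) (D : V -> Type) (sigma : forall v, D v)
  (S : {set V}) : Dom D S := fun x => sigma (sval x).
Arguments restr {V D} sigma S x.

(* A directed hypergraph whose vertices are the variables V and whose
   hyperedges (of finite type Edge) are tasks: edge e has source set
   In e (= read set R_e), target set Out e (= write set W_e), and the
   relation task e ⊆ Dom(R_e) × Dom(W_e).  Condition (iv) of a TG is
   built in by typing the task relation on Dom(In e) × Dom(Out e). *)
Record hypergraph (V : finType) (D : V -> Type) := Hypergraph {
  Edge : finType;
  In : Edge -> {set V};
  Out : Edge -> {set V};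
  task : forall e : Edge, Dom D (In e) -> Dom D (Out e) -> Prop
}.

Definition hstep V D (G : @hypergraph V D) (u v : V) : Prop :=
  exists e : Edge G, u \in In e /\ v \in Out e.

Definition is_task V D (G : @hypergraph V D) (e : Edge G) : Prop :=
  [disjoint In e & Out e] /\
  forall r : Dom D (In e), exists w : Dom D (Out e), task r w.

Definition is_TG V D (G : @hypergraph V D) : Prop :=
  (forall e : Edge G, is_task e) /\
  (forall v, ~ clos_trans V (hstep G) v v) /\
  (forall v, exists e : Edge G, v \in In e \/ v \in Out e) /\
  (forall v (e1 e2 : Edge G), v \in Out e1 -> v \in Out e2 -> e1 = e2).

Definition initial V D (G : @hypergraph V D) : {set V} :=
  [set v | [forall e : Edge G, v \notin Out e]].

(* The relation of the TG from R to W: exists values for the remaining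
   variables such that all tasks hold; phrased as existence of a full
   valuation agreeing with r on R and with w on W. *)
Definition TG_rel V D (G : @hypergraph V D) (R W : {set V})
  (r : Dom D R) (w : Dom D W) : Prop :=
  exists sigma : forall v, D v,
    restr sigma R = r /\ restr sigma W = w /\
    forall e : Edge G, task (restr sigma (In e)) (restr sigma (Out e)).
Arguments TG_rel {V D} G R W r w.

(* Main.v *)
Require Import Defs.
From mathcomp Require Import all_boot.
From Stdlib Require Import Relations ClassicalEpsilon FunctionalExtensionality.
Set Implicit Arguments. Unset Strict Implicit. Unset Printing Implicit Defensive.

Definition upd (V : finType) (D : V -> Type) (S : {set V}) (w : Dom D S)
  (sigma : forall v, D v) : forall v, D v :=
  fun v => (if v \in S as b return (v \in S = b -> D v)
            then fun h => w (exist _ v h) else fun _ => sigma v) (erefl (v \in S)).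

Lemma upd_out (V : finType) (D : V -> Type) (S : {set V}) (w : Dom D S)
  (sigma : forall v, D v) v : v \notin S -> upd w sigma v = sigma v.
Proof.
move=> H; rewrite /upd.
have: forall b (h : v \in S = b), b = false ->
  (if b as b0 return (v \in S = b0 -> D v)
   then fun h => w (exist _ v h) else fun _ => sigma v) h = sigma v by case.
by move=> /(_ _ (erefl (v \in S))); apply; apply/negbTE.
Qed.

Lemma restr_upd (V : finType) (D : V -> Type) (S : {set V}) (w : Dom D S)
  (sigma : forall v, D v) : restr (upd w sigma) S = w.
Proof.
apply: functional_extensionality_dep => -[v h] /=; rewrite /restr /= /upd.
have: forall b (e : v \in S = b),
  (if b as b0 return (v \in S = b0 -> D v)
   then fun h => w (exist _ v h) else fun _ => sigma v) e = w (exist _ v h).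
  case=> e; first by rewrite (bool_irrelevance e h).
  by exfalso; move: (h); rewrite e.
by apply.
Qed.

Lemma restr_upd_disj (V : finType) (D : V -> Type) (S T : {set V}) (w : Dom D S)
  (sigma : forall v, D v) : (forall v, v \in T -> v \notin S) ->
  restr (upd w sigma) T = restr sigma T.
Proof.
move=> H; apply: functional_extensionality_dep => -[v h] /=.
by rewrite /restr /= upd_out //; apply: H.
Qed.

Definition cb (V : finType) (D : V -> Type) (G : @hypergraph V D) (u v : V) : bool :=
  if excluded_middle_informative (clos_trans V (hstep G) u v) then true else false.

Lemma cbP (V : finType) (D : V -> Type) (G : @hypergraph V D) u v :
  cb G u v <-> clos_trans V (hstep G) u v.
Proof. by rewrite /cb; case: excluded_middle_informative. Qed.

Definition dep (V : finType) (D : V -> Type) (G : @hypergraph V D) (v : V) : nat :=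
  #|[set u | cb G u v]|.

Lemma dep_lt (V : finType) (D : V -> Type) (G : @hypergraph V D) u v :
  (forall x, ~ clos_trans V (hstep G) x x) ->
  hstep G u v -> dep G u < dep G v.
Proof.
move=> Hac Huv; apply: proper_card; apply/properP; split.
  apply/subsetP => x; rewrite !inE => /cbP Hx; apply/cbP.
  by apply: t_trans Hx (t_step _ _ _ _ Huv).
exists u; rewrite !inE; first by apply/cbP; apply: t_step.
by apply/negP => /cbP /Hac.
Qed.

Lemma out_not_initial (V : finType) (D : V -> Type) (G : @hypergraph V D) (e : Edge G) v :
  v \in Out e -> v \notin initial G.
Proof. by move=> H; rewrite inE; apply/forallPn; exists e; rewrite negbK. Qed.

Lemma inhab (V : finType) (D : V -> Type) (G : @hypergraph V D)
  (r : Dom D (initial G)) : is_TG G -> forall n v, dep G v < n -> inhabited (D v).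
Proof.
move=> [Htask [Hac _]]; elim=> [//|n IH] v Hv.
case: (boolP (v \in initial G)) => Hi; first by constructor; exact: (r (exist _ v Hi)).
move: Hi; rewrite inE => /forallPn [e]; rewrite negbK => Hve.
have Hin : forall x : {u | u \in In e}, inhabited (D (sval x)).
  move=> [u hu] /=; apply: IH.
  have := dep_lt Hac (ex_intro _ e (conj hu Hve)) : dep G u < dep G v.
  move=> H; apply: leq_trans H _; by [].
have [w _] := (Htask e).2 (fun x => epsilon (Hin x) (fun _ => True)).
by constructor; exact: (w (exist _ v Hve)).
Qed.

Definition pr (V : finType) (D : V -> Type) (G : @hypergraph V D) (e' e : Edge G) :=
  exists v, v \in Out e' /\ v \in In e.

Definition Inv (V : finType) (D : V -> Type) (G : @hypergraph V D)
  (r : Dom D (initial G)) (F : {set Edge G}) (sigma : forall v, D v) :=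
  [/\ restr sigma (initial G) = r,
      (forall e, e \in F -> task (restr sigma (In e)) (restr sigma (Out e))) &
      (forall e e', e \in F -> pr e' e -> e' \in F)].

Theorem lemma1 (V : finType) (D : V -> Type) (G : @hypergraph V D)
  (W : {set V}) :
  is_TG G -> W \subset ~: initial G ->
  forall r : Dom D (initial G),
    exists w : Dom D W, TG_rel G (initial G) W r w.
Proof.
move=> HTG _ r.
have Hinh : forall v, inhabited (D v) by move=> v; apply: (inhab r HTG (ltnSn _)).
pose sigma0 : forall v, D v := fun v => epsilon (Hinh v) (fun _ => True).
move: HTG => [Htask [Hac [_ Huniq]]].
pose L (e : Edge G) := \max_(u in In e) (dep G u).+1.
have HL : forall e' e, pr e' e -> L e' < L e.
  move=> e' e [v [Hv1 Hv2]].
  have H1 : L e' <= dep G v.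
    apply/bigmax_leqP => u Hu; apply: dep_lt => //; by exists e'.
  apply: leq_ltn_trans H1 _; rewrite /L; exact: (@leq_bigmax_cond _ (fun u => u \in In e) (fun u => (dep G u).+1) v Hv2).
have main : forall k, exists F sigma, Inv r F sigma /\ (k <= #|F| \/ F = setT).
  elim=> [|k [F [sigma [[H1 H2 H3] Hk]]]].
    exists set0, (upd r sigma0); split; last by left.
    by split; [apply: restr_upd | move=> e; rewrite inE | move=> e e'; rewrite inE].
  case: (boolP [exists e, e \notin F]) => [/existsP [e0 He0]|]; last first.
    move=> /existsPn Hall; exists F, sigma; split; first by split.
    by right; apply/setP => e; rewrite inE; apply/negPn/Hall.
  case: Hk => [Hk|HT]; last by move: He0; rewrite HT inE.
  case: (@arg_minnP _ e0 (fun e => e \notin F) L He0) => e He Hmin.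
  have Hpred : forall e', pr e' e -> e' \in F.
    move=> e' Hp; apply/negPn/negP => He'.
    by have := Hmin _ He'; rewrite leqNgt HL.
  have [Hdisj Htot] := Htask e.
  have [w Hw] := Htot (restr sigma (In e)).
  exists (e |: F), (upd w sigma); split; last first.
    by left; rewrite cardsU1 He.
  split.
  - rewrite restr_upd_disj //; move=> v Hv; apply/negP => Hv'.
    by move: Hv; apply/negP; apply: out_not_initial Hv'.
  - move=> e'; rewrite !inE => /orP [/eqP ->|He'].
      rewrite restr_upd restr_upd_disj //.
      by move=> v Hv; rewrite (disjointFr Hdisj Hv).
    rewrite !restr_upd_disj; first exact: H2.
    + move=> v Hv; apply/negP => Hv'.
      have Heq := Huniq v _ _ Hv Hv'; by move: He; rewrite -Heq He'.
    + move=> v Hv; apply/negP => Hv'.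
      by move: He; rewrite (H3 _ _ He' (ex_intro _ v (conj Hv' Hv))).
  - move=> e1 e2; rewrite !inE => /orP [/eqP -> Hp|He1 Hp].
      by rewrite Hpred ?orbT.
    by rewrite (H3 _ _ He1 Hp) orbT.
have [F [sigma [[H1 H2 _] HF]]] := main #|Edge G|.
have HT : F = setT.
  case: HF => // HF; apply/eqP; rewrite eqEcard subsetT cardsT HF //.
exists (restr sigma W), sigma; split => //; split => // e.
by apply: H2; rewrite HT inE.
Qed.
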